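(* Let $z_0\in\mathbb{Z}_{\ge0}$, $z\in\mathbb{Z}_{>0}$, and $x,y\in[0,1)$ with $x<y$. Then $$\left|\frac{\big|\Phi[z_0,z_0+z)\cap[x,y)\big|}{z}-(y-x)\right|<\frac{2\lfloor\lg z\rfloor+2}{z}.$$
   Context: $\lg=\log_2$. The van der Corput function $\psi:\mathbb{Z}_{\ge0}\to[0,1)$ is $\psi(0)=0$ and, for $i>0$ written in binary as $i=\sum_{j=0}^{\lfloor\lg i\rfloor}\beta_j(i)2^j$ with $\beta_j(i)\in\{0,1\}$, $\psi(i)=\sum_{j}\beta_j(i)2^{-(j+1)}$. For integers $0\le z<z'$, $\Phi[z,z')=\{\psi(i): i\in\{z,z+1,\dots,z'-1\}\}$. *)

(* Defs.v *)
From Stdlib Require Import Reals Lra Lia Arith List.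
Open Scope R_scope.

(* lg = log2; floor(lg i) for i>0 is Nat.log2 i. *)
Definition beta (j i : nat) : R := if Nat.testbit i j then 1 else 0.

Definition psi (i : nat) : R :=
  match i with
  | O => 0
  | S _ => sum_f_R0 (fun j => beta j i * / 2 ^ (S j)) (Nat.log2 i)
  end.

Definition Phi (z z' : nat) (r : R) : Prop :=
  exists i : nat, (z <= i)%nat /\ (i < z')%nat /\ r = psi i.

(* l enumerates (without repetition) exactly the finite set A; then
   |A| = length l. *)
Definition enumerates (A : R -> Prop) (l : list R) : Prop :=
  NoDup l /\ forall r, In r l <-> A r.

(* Main.v *)
Require Import Defs.
From Stdlib Require Import Reals Lra Lia Arith List.
Open Scope R_scope.

Definition Sb (N i : nat) : R := sum_f_R0 (fun j => beta j i * / 2 ^ (S j)) N.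

Lemma Sb_ext_above i N : (Nat.log2 i <= N)%nat -> Sb N i = Sb (Nat.log2 i) i.
Proof.
  induction N as [|N IH]; intro H.
  - replace (Nat.log2 i) with 0%nat by lia. reflexivity.
  - destruct (Nat.eq_dec (Nat.log2 i) (S N)) as [E|E].
    + rewrite E; reflexivity.
    + change (Sb (S N) i) with (Sb N i + beta (S N) i * / 2 ^ S (S N)).
      rewrite IH by lia.
      unfold beta. rewrite Nat.bits_above_log2 by lia. lra.
Qed.

Lemma psi_Sb i N : (Nat.log2 i <= N)%nat -> psi i = Sb N i.
Proof.
  intro H. rewrite Sb_ext_above by exact H.
  destruct i as [|i'].
  - simpl. unfold Sb, beta. simpl. lra.
  - reflexivity.
Qed.

Lemma Sb_double N i b :
  Sb (S N) (2 * i + Nat.b2n b) = (if b then 1 else 0) / 2 + Sb N i / 2.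
Proof.
  unfold Sb. rewrite decomp_sum by lia. simpl Init.Nat.pred.
  f_equal.
  - unfold beta. destruct b; simpl Nat.b2n.
    + rewrite Nat.testbit_odd_0. simpl. lra.
    + rewrite Nat.add_0_r, Nat.testbit_even_0. simpl. lra.
  - unfold Rdiv. rewrite Rmult_comm, scal_sum. apply sum_eq. intros j _.
    unfold beta. destruct b; simpl Nat.b2n.
    + rewrite Nat.testbit_odd_succ by lia.
      replace (2 ^ S (S j)) with (2 * 2 ^ S j) by (simpl; ring).
      rewrite Rinv_mult. ring.
    + rewrite Nat.add_0_r, Nat.testbit_even_succ by lia.
      replace (2 ^ S (S j)) with (2 * 2 ^ S j) by (simpl; ring).
      rewrite Rinv_mult. ring.
Qed.

Lemma psi_double i b :
  psi (2 * i + Nat.b2n b) = (if b then 1 else 0) / 2 + psi i / 2.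
Proof.
  assert (Hl1 := Nat.log2_le_lin i (Nat.le_0_l _)).
  assert (Hl2 := Nat.log2_le_lin (2 * i + Nat.b2n b) (Nat.le_0_l _)).
  rewrite (psi_Sb (2 * i + Nat.b2n b) (S (2 * i + Nat.b2n b))) by lia.
  rewrite Sb_double. rewrite <- (psi_Sb i) by lia. reflexivity.
Qed.

Lemma psi_even i : psi (2 * i) = psi i / 2.
Proof. pose proof (psi_double i false) as H. simpl Nat.b2n in H.
  rewrite Nat.add_0_r in H. rewrite H. lra. Qed.

Lemma psi_odd i : psi (2 * i + 1) = / 2 + psi i / 2.
Proof. pose proof (psi_double i true) as H. simpl Nat.b2n in H. rewrite H. lra. Qed.

Lemma psi_bounds i : 0 <= psi i < 1.
Proof.
  induction i as [i IH] using (well_founded_induction lt_wf).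
  destruct i as [|i'].
  - simpl. lra.
  - rewrite (Nat.div2_odd (S i')).
    assert (Hlt : (Nat.div2 (S i') < S i')%nat) by (apply Nat.lt_div2; lia).
    specialize (IH _ Hlt). rewrite psi_double. destruct (Nat.odd (S i')); lra.
Qed.

Lemma psi_inj_aux n : forall i j, (i + j < n)%nat -> psi i = psi j -> i = j.
Proof.
  induction n as [|n IH]; intros i j Hn H; [lia|].
  destruct (Nat.eq_dec (i + j) 0) as [E|E]; [lia|].
  rewrite (Nat.div2_odd i), (Nat.div2_odd j) in H |- *.
  rewrite !psi_double in H.
  pose proof (psi_bounds (Nat.div2 i)). pose proof (psi_bounds (Nat.div2 j)).
  assert (Hi := Nat.div2_odd i). assert (Hj := Nat.div2_odd j).
  assert (IH' : Nat.div2 i = Nat.div2 j -> (2 * Nat.div2 i + Nat.b2n (Nat.odd i) = 2 * Nat.div2 j + Nat.b2n (Nat.odd j))%nat ).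
  { intro e. rewrite e. f_equal. destruct (Nat.odd i), (Nat.odd j); simpl in *; try reflexivity; exfalso; lra. }
  apply IH'. apply IH.
  - destruct (Nat.odd i), (Nat.odd j); simpl Nat.b2n in *; lia.
  - destruct (Nat.odd i), (Nat.odd j); lra.
Qed.

Lemma psi_inj i j : psi i = psi j -> i = j.
Proof. apply (psi_inj_aux (S (i + j))); lia. Qed.

Lemma psi_shift k : forall m r, (r < 2 ^ k)%nat ->
  psi (m * 2 ^ k + r) = psi r + psi m / 2 ^ k.
Proof.
  induction k as [|k IH]; intros m r Hr.
  - simpl in Hr. replace r with 0%nat by lia. simpl. rewrite Nat.mul_1_r, Nat.add_0_r. lra.
  - rewrite Nat.pow_succ_r' in Hr |- *.
    set (P := (2 ^ k)%nat) in *.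
    rewrite (Nat.div2_odd r) in Hr |- *.
    set (r' := Nat.div2 r) in *. set (b := Nat.odd r) in *.
    assert (Hr' : (r' < P)%nat) by (destruct b; simpl Nat.b2n in Hr; lia).
    replace (m * (2 * P) + (2 * r' + Nat.b2n b))%nat with (2 * (m * P + r') + Nat.b2n b)%nat by ring.
    rewrite !psi_double. rewrite IH by exact Hr'.
    assert (0 < 2 ^ k) by (apply pow_lt; lra).
    simpl pow. field. lra.
Qed.

Fixpoint cnt (P : nat -> bool) (a n : nat) : nat :=
  match n with O => O | S n' => (cnt P a n' + (if P (a + n')%nat then 1 else 0))%nat end.

Lemma cnt_add P a n1 n2 : cnt P a (n1 + n2) = (cnt P a n1 + cnt P (a + n1) n2)%nat.
Proof. induction n2 as [|n2 IH]; simpl.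
  - rewrite Nat.add_0_r; lia.
  - rewrite Nat.add_succ_r. simpl. rewrite IH. rewrite Nat.add_assoc. lia. Qed.

Lemma cnt_shift P a n : cnt P a n = cnt (fun r => P (a + r)%nat) 0 n.
Proof. induction n as [|n IH]; simpl; [reflexivity|]. rewrite IH. reflexivity. Qed.

Lemma cnt_ext P Q a n : (forall r, (r < n)%nat -> P (a + r)%nat = Q (a + r)%nat) -> cnt P a n = cnt Q a n.
Proof. induction n as [|n IH]; intro H; simpl; [reflexivity|].
  rewrite IH by (intros; apply H; lia). rewrite H by lia. reflexivity. Qed.

Lemma cnt_even P n : cnt P 0 (2 * n) = (cnt (fun r => P (2 * r)%nat) 0 n + cnt (fun r => P (2 * r + 1)%nat) 0 n)%nat.
Proof. induction n as [|n IH]; [reflexivity|].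
  replace (2 * S n)%nat with (2 * n + 1 + 1)%nat by lia.
  rewrite !cnt_add, IH. simpl. rewrite !Nat.add_0_r.
  replace (2 * n + 1)%nat with (S (2 * n))%nat by lia. simpl.
  replace (n + n)%nat with (2 * n)%nat by lia. lia. Qed.

Lemma cnt_filter P a n : length (filter P (seq a n)) = cnt P a n.
Proof. induction n as [|n IH]; [reflexivity|].
  rewrite seq_S, filter_app, length_app, IH. simpl. destruct (P (a + n)%nat); reflexivity. Qed.

Definition lt_b (t v : R) : bool := if Rlt_dec v t then true else false.
Definition in_b (x y v : R) : bool := if Rle_dec x v then lt_b y v else false.

Lemma cnt_split (f : nat -> R) x y a n : x <= y ->
  (cnt (fun r => in_b x y (f r)) a n + cnt (fun r => lt_b x (f r)) a n = cnt (fun r => lt_b y (f r)) a n)%nat.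
Proof. intro Hxy. induction n as [|n IH]; [reflexivity|]. simpl.
  rewrite <- IH. unfold in_b, lt_b.
  destruct (Rle_dec x (f (a+n)%nat)), (Rlt_dec (f (a + n)%nat) y), (Rlt_dec (f (a + n)%nat) x); try lra; lia. Qed.

Definition F k c t := cnt (fun r => lt_b t (psi r + c / 2 ^ k)) 0 (2 ^ k).

Lemma F_S k c t : F (S k) c t = (F k c (2 * t) + F k c (2 * t - 1))%nat.
Proof.
  unfold F. rewrite Nat.pow_succ_r', cnt_even. f_equal; apply cnt_ext; intros r _; rewrite Nat.add_0_l.
  - rewrite psi_even. unfold lt_b. assert (0 < 2 ^ k) by (apply pow_lt; lra).
    replace (c / 2 ^ S k) with ((c / 2 ^ k) / 2) by (simpl; field; lra).
    destruct (Rlt_dec _ t), (Rlt_dec _ (2 * t)); auto; lra.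
  - rewrite psi_odd. unfold lt_b. assert (0 < 2 ^ k) by (apply pow_lt; lra).
    replace (c / 2 ^ S k) with ((c / 2 ^ k) / 2) by (simpl; field; lra).
    destruct (Rlt_dec _ t), (Rlt_dec _ (2 * t - 1)); auto; lra.
Qed.

Lemma F_spec k c : 0 <= c < 1 -> forall t,
  (t <= 0 -> F k c t = 0%nat) /\ (1 <= t -> F k c t = (2 ^ k)%nat) /\
  (0 <= t <= 1 -> 2 ^ k * t - c <= INR (F k c t) < 2 ^ k * t - c + 1).
Proof.
  intro Hc. induction k as [|k IH]; intro t.
  - unfold F. simpl. unfold lt_b. replace (0 + c / 1) with c by field.
    destruct (Rlt_dec c t); simpl; repeat split; intros; lra.
  - rewrite F_S. destruct (IH (2 * t)) as [A1 [A2 A3]]. destruct (IH (2 * t - 1)) as [B1 [B2 B3]].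
    assert (0 < 2 ^ k) by (apply pow_lt; lra).
    replace (2 ^ S k) with (2 * 2 ^ k) by (simpl; ring).
    rewrite Nat.pow_succ_r'.
    repeat split; intros.
    + rewrite A1, B1 by lra. reflexivity.
    + rewrite A2, B2 by lra. lia.
    + destruct (Rle_dec t (1/2)).
      * rewrite B1 by lra. rewrite Nat.add_0_r. pose proof (A3 ltac:(lra)); lra.
      * rewrite A2 by lra. rewrite plus_INR, pow_INR. replace (INR 2) with 2 by (simpl; ring). pose proof (B3 ltac:(lra)); lra.
    + destruct (Rle_dec t (1/2)).
      * rewrite B1 by lra. rewrite Nat.add_0_r. pose proof (A3 ltac:(lra)); lra.
      * rewrite A2 by lra. rewrite plus_INR, pow_INR. replace (INR 2) with 2 by (simpl; ring). pose proof (B3 ltac:(lra)); lra.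
Qed.

Section Main.
Variables x y : R.
Hypothesis Hx : 0 <= x. Hypothesis Hxy : x < y. Hypothesis Hy : y < 1.

Definition Pin i := in_b x y (psi i).
Definition C a n := INR (cnt Pin a n) - INR n * (y - x).

Lemma C_add a n1 n2 : C a (n1 + n2) = C a n1 + C (a + n1) n2.
Proof. unfold C. rewrite cnt_add, !plus_INR. ring. Qed.

Lemma C_0 a : C a 0 = 0.
Proof. unfold C. simpl. ring. Qed.

Lemma block m k : Rabs (C (m * 2 ^ k) (2 ^ k)) < 1.
Proof.
  unfold C. rewrite cnt_shift.
  rewrite (cnt_ext _ (fun r => in_b x y (psi r + psi m / 2 ^ k)) 0 (2^k)).
  2:{ intros r Hr. simpl. unfold Pin. rewrite psi_shift by exact Hr. reflexivity. }
  pose proof (cnt_split (fun r => psi r + psi m / 2 ^ k) x y 0 (2 ^ k) (Rlt_le _ _ Hxy)) as Hs.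

  assert (Hc := psi_bounds m).
  destruct (F_spec k (psi m) Hc x) as [_ [_ X3]]. destruct (F_spec k (psi m) Hc y) as [_ [_ Y3]].
  specialize (X3 ltac:(lra)). specialize (Y3 ltac:(lra)). unfold F in X3, Y3.
  rewrite <- Hs in Y3. rewrite plus_INR in Y3. rewrite pow_INR. replace (INR 2) with 2 by (simpl; ring).
  apply Rabs_def1; lra.
Qed.

Lemma right_part k : forall e n a, (n < 2 ^ S k)%nat -> (a + n = e * 2 ^ S k)%nat -> Rabs (C a n) < INR (S k).
Proof.
  induction k as [|k IH]; intros e n a Hn Ha.
  - simpl in Hn. destruct n as [|[|n]]; [|idtac|lia].
    + rewrite C_0, Rabs_R0. simpl; lra.
    + pose proof (block a 0) as B. simpl pow in B. rewrite Nat.pow_0_r, Nat.mul_1_r in B. simpl. exact B.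
  - rewrite Nat.pow_succ_r' in Hn, Ha. set (P := (2 ^ S k)%nat) in *.
    assert (HP : (0 < P)%nat) by (unfold P; apply Nat.neq_0_lt_0, Nat.pow_nonzero; lia).
    destruct (Nat.lt_ge_cases n P) as [Hl|Hl].
    + rewrite S_INR. specialize (IH (2 * e)%nat n a Hl ltac:(fold P; lia)). pose proof (pos_INR (S k)). lra.
    + assert (He : (1 <= e)%nat) by nia.
      replace n with ((n - P) + P)%nat by lia. rewrite C_add.
      assert (IH1 := IH (2 * e - 1)%nat (n - P)%nat a ltac:(fold P; lia) ltac:(fold P; nia)).
      assert (B := block (2 * e - 1) (S k)). fold P in B.
      replace (a + (n - P))%nat with ((2 * e - 1) * P)%nat by nia.
      rewrite S_INR. eapply Rle_lt_trans; [apply Rabs_triang|]. lra.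
Qed.

Lemma left_part k : forall e n a, (n < 2 ^ S k)%nat -> (a = e * 2 ^ S k)%nat -> Rabs (C a n) < INR (S k).
Proof.
  induction k as [|k IH]; intros e n a Hn Ha.
  - simpl in Hn. destruct n as [|[|n]]; [|idtac|lia].
    + rewrite C_0, Rabs_R0. simpl; lra.
    + pose proof (block a 0) as B. simpl pow in B. rewrite Nat.pow_0_r, Nat.mul_1_r in B. simpl. exact B.
  - rewrite Nat.pow_succ_r' in Hn, Ha. set (P := (2 ^ S k)%nat) in *.
    assert (HP : (0 < P)%nat) by (unfold P; apply Nat.neq_0_lt_0, Nat.pow_nonzero; lia).
    destruct (Nat.lt_ge_cases n P) as [Hl|Hl].
    + rewrite S_INR. specialize (IH (2 * e)%nat n a Hl ltac:(fold P; lia)). pose proof (pos_INR (S k)). lra.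
    + replace n with (P + (n - P))%nat by lia. rewrite C_add.
      assert (IH1 := IH (2 * e + 1)%nat (n - P)%nat (a + P)%nat ltac:(fold P; lia) ltac:(fold P; nia)).
      assert (B := block (2 * e) (S k)). fold P in B.
      replace a with ((2 * e) * P)%nat at 1 by nia.
      rewrite S_INR. eapply Rle_lt_trans; [apply Rabs_triang|]. lra.
Qed.

Lemma main_bound z0 z : (0 < z)%nat -> Rabs (C z0 z) < 2 * INR (Nat.log2 z) + 2.
Proof.
  intro Hz. destruct (Nat.log2_spec z Hz) as [L1 L2].
  destruct (Nat.log2 z) as [|k] eqn:EL.
  - simpl in L1, L2. replace z with 1%nat by lia.
    pose proof (block z0 0) as B. rewrite Nat.pow_0_r, Nat.mul_1_r in B. simpl. lra.
  - set (P := (2 ^ S k)%nat) in *.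
    assert (HP : (0 < P)%nat) by (unfold P; apply Nat.neq_0_lt_0, Nat.pow_nonzero; lia).
    rewrite Nat.pow_succ_r' in L2. fold P in L2.
    set (q := (z0 / P)%nat). set (rm := (z0 mod P)%nat).
    assert (Hz0 : z0 = (P * q + rm)%nat) by (apply Nat.div_mod; lia).
    assert (Hrm : (rm < P)%nat) by (apply Nat.mod_upper_bound; lia).
    set (n1 := if Nat.eq_dec rm 0 then 0%nat else (P - rm)%nat).
    set (e := if Nat.eq_dec rm 0 then q else S q).
    assert (Hn1 : (n1 < P)%nat /\ (z0 + n1 = e * P)%nat).
    { unfold n1, e. destruct (Nat.eq_dec rm 0); split; nia. }
    destruct Hn1 as [Hn1a Hn1b].
    replace z with (n1 + (z - n1))%nat by lia. rewrite C_add.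
    assert (R1 := right_part k e n1 z0 Hn1a Hn1b).
    assert (R2 : Rabs (C (z0 + n1) (z - n1)) < INR (S k) + 1).
    { destruct (Nat.lt_ge_cases (z - n1) P) as [Hl|Hl].
      - pose proof (left_part k e (z - n1) (z0 + n1) Hl Hn1b). lra.
      - replace (z - n1)%nat with (P + (z - n1 - P))%nat by lia. rewrite C_add.
        assert (IH1 := left_part k (S e) (z - n1 - P)%nat (z0 + n1 + P)%nat ltac:(fold P; lia) ltac:(fold P; nia)).
        assert (B := block e (S k)). fold P in B. rewrite <- Hn1b in B.
        eapply Rle_lt_trans; [apply Rabs_triang|]. lra. }
    eapply Rle_lt_trans; [apply Rabs_triang|]. rewrite S_INR in *. lra.
Qed.
End Main.

Theorem lemmaB5 (z0 z : nat) (x y : R) (l : list R) :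
  (0 < z)%nat ->
  0 <= x -> x < y -> y < 1 ->
  enumerates (fun r => Phi z0 (z0 + z) r /\ x <= r < y) l ->
  Rabs (INR (length l) / INR z - (y - x)) <
    (2 * INR (Nat.log2 z) + 2) / INR z.
Proof.
  intros Hz Hx Hxy Hy [Hnd Hl].
  set (L2 := map psi (filter (Pin x y) (seq z0 z))).
  assert (Hin : forall r, In r L2 <-> In r l).
  { intro r. rewrite Hl. unfold L2. rewrite in_map_iff. split.
    - intros [i [Hi Hi2]]. apply filter_In in Hi2. destruct Hi2 as [Hs Hp].
      apply in_seq in Hs. unfold Pin, in_b, lt_b in Hp.
      destruct (Rle_dec x (psi i)), (Rlt_dec (psi i) y); try discriminate.
      subst r. split; [exists i; repeat split; lia| lra].
    - intros [[i [H1 [H2 H3]]] H4]. exists i. split; [auto|].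
      apply filter_In. split; [apply in_seq; lia|]. subst r.
      unfold Pin, in_b, lt_b. destruct (Rle_dec x (psi i)), (Rlt_dec (psi i) y); auto; lra. }
  assert (Hnd2 : NoDup L2).
  { unfold L2. apply NoDup_map_NoDup_ForallPairs.
    - intros a b _ _. apply psi_inj.
    - apply NoDup_filter, seq_NoDup. }
  assert (Hlen : length l = length L2).
  { apply Nat.le_antisymm; apply NoDup_incl_length; auto; intros r; apply Hin. }
  assert (Hlen2 : length L2 = cnt (Pin x y) z0 z).
  { unfold L2. rewrite length_map. apply cnt_filter. }
  pose proof (main_bound x y Hx Hxy Hy z0 z Hz) as M.
  unfold C in M. rewrite <- Hlen2, <- Hlen in M.
  assert (Hzp : 0 < INR z) by (apply lt_0_INR; lia).
  replace (INR (length l) / INR z - (y - x)) with ((INR (length l) - INR z * (y - x)) * / INR z) by (field; lra).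
  rewrite Rabs_mult, (Rabs_pos_eq (/ INR z)) by (left; apply Rinv_0_lt_compat; lra).
  unfold Rdiv. apply Rmult_lt_compat_r; [apply Rinv_0_lt_compat; lra|exact M].
Qed.
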